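(* Let the Algorithm be as in the context, run with $G_k:=\mathrm{grad} f(x_k)$ for all $k$, and assume (A1), (A2), (A3)-b, (A4), that $\sigma_0\le2\gamma L_H$, and that $f$ attains its minimum over $\mathcal M$. Suppose that for every iteration $k$ the constant $\delta_H$ satisfies \[ \delta_H\le\min\Big\{\min\{\tfrac1{12},\tfrac{1-\rho_{TH}}{6}\}\big(\sqrt{K_H^2+4\sigma_k\varepsilon_g}-K_H\big),\ \min\{\tfrac16,\tfrac{1-\rho_{TH}}{3}\}\nu\varepsilon_H\Big\}. \] Then the Algorithm terminates after at most $\mathcal O(\max\{\varepsilon_g^{-2},\varepsilon_H^{-3}\})$ iterations.
   Context: Let $\mathcal M$ be a connected complete Riemannian manifold; $\langle\cdot,\cdot\rangle$ and $\|\cdot\|$ denote the inner product and norm on tangent spaces $T_x\mathcal M$. Let $f=\frac1n\sum_{i=1}^n f_i$ with each $f_i:\mathcal M\to\mathbb R$ twice continuously differentiable; $\mathrm{grad} f$ is the Riemannian gradient. A retraction is a smooth map $R:T\mathcal M\to\mathcal M$ whose restriction $R_x$ to $T_x\mathcal M$ satisfies $R_x(0_x)=x$, $DR_x(0_x)=\mathrm{Id}$. $\nabla^2 f\circ R_x(0_x)$ is the Hessian at $0_x$ of $f\circ R_x$ on the inner-product space $T_x\mathcal M$. $\lambda_{\min}(H)$ denotes the smallest eigenvalue of a self-adjoint operator $H$. Algorithm: fix $\varepsilon_g,\varepsilon_H,\rho_{TH}\in(0,1)$, $\gamma>1$, $x_0\in\mathcal M$, $\sigma_0>0$. At iteration $k$: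 with $G_k\in T_{x_k}\mathcal M$ and a constructed self-adjoint $H_k$ on $T_{x_k}\mathcal M$, if $\|G_k\|\le\varepsilon_g$ and $\lambda_{\min}(H_k)\ge-\varepsilon_H$, stop; otherwise choose $\eta_k\in T_{x_k}\mathcal M$ approximately minimizing $m_k(\eta):=\langle G_k,\eta\rangle+\frac12\langle H_k[\eta],\eta\rangle+\frac13\sigma_k\|\eta\|^3$, set $\rho_k=\frac{f(x_k)-f\circ R_{x_k}(\eta_k)}{-m_k(\eta_k)}$; if $\rho_k\ge\rho_{TH}$ set $x_{k+1}=R_{x_k}(\eta_k)$, $\sigma_{k+1}=\sigma_k/\gamma$, else $x_{k+1}=x_k$, $\sigma_{k+1}=\gamma\sigma_k$. Cauchy point and eigenpoint: $\eta_k^C:=-\alpha^C G_k$ with $\alpha^C\in\arg\min_{\alpha\ge0}m_k(-\alpha G_k)$. Fix $\nu\in(0,1)$. When $\lambda_{\min}(H_k)<0$, $\eta_k^E:=\alpha^E u_k$ where $u_k$ satisfies $\langle u_k,H_k[u_k]\rangle\le\nu\lambda_{\min}(H_k)\|u_k\|^2<0$ and $\langle G_k,u_k\rangle\le0$, and $\alpha^E\in\arg\min_{\alpha\ge0}m_k(\alpha u_k)$. Assumptions: (A1) there is $L_H>0$ with $\big|f\circ R_{x_k}(\eta_k)-f(x_k)-\langle\mathrm{grad} f(x_k),\eta_k\rangle-\frac12\langle\nabla^2 f\circ R_{x_k}(0_{x_k})[\eta_k],\eta_k\rangle\big|\le\frac12L_H\|\eta_k\|^3$ for all $k$. (A2)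 there is $K_H>0$ with $\|H_k\|:=\sup_{\|\eta\|\le1}\langle\eta,H_k[\eta]\rangle\le K_H$ for all $k$. (A3)-b there is $\delta_H\in(0,1)$ with $\|(H_k-\nabla^2 f\circ R_{x_k}(0_{x_k}))[\eta_k]\|\le\delta_H\|\eta_k\|$ for all $k$. (A4) for all $k$, $-m_k(\eta_k)\ge-m_k(\eta_k^C)$, and $-m_k(\eta_k)\ge-m_k(\eta_k^E)$ whenever $\lambda_{\min}(H_k)<0$. The constant in $\mathcal O(\cdot)$ is independent of $\varepsilon_g,\varepsilon_H$. *)

(* Defs.v *)
From HB Require Import structures.
From mathcomp Require Import all_boot all_order all_algebra.
From mathcomp Require Import all_classical all_reals all_analysis.
Set Implicit Arguments. Unset Strict Implicit. Unset Printing Implicit Defensive.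
Import Order.TTheory GRing.Theory Num.Theory.
Import numFieldNormedType.Exports.
Local Open Scope ring_scope.
Local Open Scope classical_set_scope.

Section RiemDefs.
Variable R : realType.
Variable d : nat.

(* A tangent space T_x M (dimension d) is identified, through an orthonormal
   frame, with the Euclidean space 'rV[R]_d; operators are d x d matrices
   acting on row vectors:  H[u] := u *m H. *)
Definition ip (u v : 'rV[R]_d) : R := (u *m v^T) 0 0.
Definition enorm (u : 'rV[R]_d) : R := Num.sqrt (ip u u).
Definition app (H : 'M[R]_d) (u : 'rV[R]_d) : 'rV[R]_d := u *m H.

Definition basis (i : 'I_d) : 'rV[R]_d := delta_mx 0 i.
Definition pderiv (i : 'I_d) (g : 'rV[R]_d -> R) : 'rV[R]_d -> R :=
  fun y => derive g y (basis i).

Definition C2 (g : 'rV[R]_d -> R) : Prop :=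
  forall i j : 'I_d,
    (forall y, derivable g y (basis j)) /\
    (forall y, derivable (pderiv j g) y (basis i)) /\
    continuous (pderiv i (pderiv j g)).

Definition egrad (g : 'rV[R]_d -> R) : 'rV[R]_d := \row_i pderiv i g 0.
Definition ehess (g : 'rV[R]_d -> R) : 'M[R]_d :=
  \matrix_(i, j) pderiv i (pderiv j g) 0.

Definition lambda_min (H : 'M[R]_d) : R := inf [set a : R | eigenvalue H a].
Definition opnorm (H : 'M[R]_d) : R :=
  sup [set ip e (app H e) | e in [set e | enorm e <= 1]].

Definition model (G : 'rV[R]_d) (H : 'M[R]_d) (sigma : R) (eta : 'rV[R]_d) : R :=
  ip G eta + 2^-1 * ip (app H eta) eta + 3^-1 * sigma * enorm eta ^+ 3.

Variable M : Type.
(* retraction, written in orthonormal coordinates of the tangent spaces *)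
Variable Rt : M -> 'rV[R]_d -> M.

(* Riemannian gradient = gradient at 0_x of f o R_x  (since DR_x(0_x) = Id) *)
Definition rgrad (f : M -> R) (x : M) : 'rV[R]_d := egrad (f \o Rt x).
Definition rhess (f : M -> R) (x : M) : 'M[R]_d := ehess (f \o Rt x).

Definition favg (n : nat) (fi : 'I_n -> M -> R) : M -> R :=
  fun y => (n%:R)^-1 * \sum_(i < n) fi i y.

Definition stop_test (epsg epsH : R) (G : 'rV[R]_d) (H : 'M[R]_d) : Prop :=
  enorm G <= epsg /\ - epsH <= lambda_min H.

(* Everything the Algorithm and the assumptions (A1),(A2),(A3)-b,(A4) and the
   bound on delta_H require at a (non-terminating) iteration k, with
   G_k := grad f(x_k). *)
Definition step_ok (f : M -> R) (rhoTH gamma nu epsg epsH LH KH deltaH : R)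
  (x : nat -> M) (sigma : nat -> R) (H : nat -> 'M[R]_d)
  (eta : nat -> 'rV[R]_d) (k : nat) : Prop :=
  let G := rgrad f (x k) in
  let Hf := rhess f (x k) in
  let m := model G (H k) (sigma k) in
  let rho := (f (x k) - f (Rt (x k) (eta k))) / (- m (eta k)) in
  (H k)^T = H k /\
  (rhoTH <= rho -> x k.+1 = Rt (x k) (eta k) /\ sigma k.+1 = sigma k / gamma) /\
  (rho < rhoTH -> x k.+1 = x k /\ sigma k.+1 = gamma * sigma k) /\
  (* (A1) *)
  `| f (Rt (x k) (eta k)) - f (x k) - ip G (eta k)
       - 2^-1 * ip (app Hf (eta k)) (eta k) | <= 2^-1 * LH * enorm (eta k) ^+ 3 /\
  (* (A2) *)
  opnorm (H k) <= KH /\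
  (* (A3)-b *)
  enorm (app (H k - Hf) (eta k)) <= deltaH * enorm (eta k) /\
  (* (A4), Cauchy point *)
  (exists aC : R, 0 <= aC /\
     (forall a : R, 0 <= a -> m (- (aC *: G)) <= m (- (a *: G))) /\
     m (eta k) <= m (- (aC *: G))) /\
  (* (A4), eigenpoint *)
  (lambda_min (H k) < 0 ->
     exists (u : 'rV[R]_d) (aE : R),
       ip u (app (H k) u) <= nu * lambda_min (H k) * enorm u ^+ 2 /\
       nu * lambda_min (H k) * enorm u ^+ 2 < 0 /\
       ip G u <= 0 /\ 0 <= aE /\
       (forall a : R, 0 <= a -> m (aE *: u) <= m (a *: u)) /\
       m (eta k) <= m (aE *: u)) /\
  deltaH <= Num.min
    (Num.min (12^-1) ((1 - rhoTH) / 6) * (Num.sqrt (KH ^+ 2 + 4 * sigma k * epsg) - KH))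
    (Num.min (6^-1) ((1 - rhoTH) / 3) * nu * epsH).

End RiemDefs.

(* Main.v *)
Set Warnings "-notation-overridden,-ambiguous-paths,-notation-incompatible-prefix".
Require Import Defs.
From HB Require Import structures.
From mathcomp Require Import all_boot all_order all_algebra.
From mathcomp Require Import all_classical all_reals all_analysis.
Import Order.TTheory GRing.Theory Num.Theory.
Import numFieldNormedType.Exports.
Local Open Scope ring_scope.
From mathcomp Require Import ring lra.
Section Main.
Variables (R : realType) (d : nat).
Implicit Types a b c s t e delta h rho p sg sm eps K : R.

Lemma cube_le a b : 0 <= a -> a <= b -> a ^+ 3 <= b ^+ 3.
Proof.
move=> a0 ab.
have : 0 <= (b - a) * (b ^+ 2 + a * b + a ^+ 2).
  apply: mulr_ge0; first lra.
  have := sqr_ge0 b; have := sqr_ge0 a; nra.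
have -> : (b - a) * (b ^+ 2 + a * b + a ^+ 2) = b ^+ 3 - a ^+ 3 by ring.
lra.
Qed.

Lemma div_anti a b c : 0 < a -> a <= b -> 0 <= c -> c / b <= c / a.
Proof.
move=> a0 ab c0; have b0 : 0 < b by apply: lt_le_trans ab.
apply: ler_wpM2l => //.
by rewrite lef_pV2 ?posrE.
Qed.

Lemma poly_ineq s t e : 0 < s -> 0 <= t -> 0 < e ->
  e / 2 * t ^+ 2 - s / 12 * t ^+ 3 <= 8 / 3 * e ^+ 3 / s ^+ 2.
Proof.
move=> s0 t0 e0.
have h : 0 <= (s * t - 4 * e) ^+ 2 * (s * t + 2 * e) / (12 * s ^+ 2).
  apply: divr_ge0; last by have := sqr_ge0 s; lra.
  apply: mulr_ge0; first exact: sqr_ge0.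
  have := mulr_ge0 (ltW s0) t0; lra.
have E : (s * t - 4 * e) ^+ 2 * (s * t + 2 * e) / (12 * s ^+ 2) =
   8 / 3 * e ^+ 3 / s ^+ 2 - (e / 2 * t ^+ 2 - s / 12 * t ^+ 3).
  by field; rewrite gt_eqF.
rewrite E in h.
lra.
Qed.

Lemma k2B delta c h s rho : 0 < delta -> 0 < h -> 0 < s -> 0 < rho < 1 ->
  0 < c -> c <= 6^-1 -> c <= (1 - rho) / 3 -> delta <= c * h ->
  8 / 3 * delta ^+ 3 / s ^+ 2 <= (1 - rho) * (h ^+ 3 / (6 * s ^+ 2)).
Proof.
move=> d0 h0 s0 /andP[r0 r1] c0 c6 cr dc.
have h1 : delta ^+ 3 <= c ^+ 3 * h ^+ 3 by rewrite -exprMn; apply: cube_le; lra.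
have h2 : c ^+ 3 <= (1 - rho) / 108.
  have : c ^+ 2 <= 36^-1 by have := cube_le _ _ (ltW c0) c6; nra.
  move=> c2; nra.
have h3 : delta ^+ 3 <= (1 - rho) / 108 * h ^+ 3.
  apply: (le_trans h1); apply: ler_wpM2r => //; exact: exprn_ge0 (ltW h0).
have s2 : 0 < s ^+ 2 by rewrite exprn_gt0.
have -> : (1 - rho) * (h ^+ 3 / (6 * s ^+ 2)) = ((1 - rho) * h ^+ 3 / 6) * (s ^+ 2)^-1.
  by field; rewrite gt_eqF.
apply: ler_wpM2r; first by rewrite invr_ge0 ltW.
have := exprn_gt0 3 h0; nra.
Qed.

Lemma k2A delta c p sg rho : 0 < delta -> 0 < p -> 0 < sg -> 0 < rho < 1 ->
  0 < c -> c <= 12^-1 -> c <= (1 - rho) / 6 -> delta <= c * (2 * sg * p) ->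
  8 / 3 * delta ^+ 3 / sg ^+ 2 <= (1 - rho) * (2 / 3 * sg * p ^+ 3).
Proof.
move=> d0 p0 s0 /andP[r0 r1] c0 c12 cr dc.
have h1 : delta ^+ 3 <= c ^+ 3 * (2 * sg * p) ^+ 3 by rewrite -exprMn; apply: cube_le; lra.
have h2 : c ^+ 3 <= (1 - rho) / 864.
  have : c ^+ 2 <= 144^-1 by nra.
  move=> c2; nra.
have q0 : 0 < (2 * sg * p) ^+ 3 by rewrite exprn_gt0 // !mulr_gt0.
have h3 : delta ^+ 3 <= (1 - rho) / 864 * (2 * sg * p) ^+ 3.
  apply: (le_trans h1); apply: ler_wpM2r => //; exact: ltW.
have s2 : 0 < sg ^+ 2 by rewrite exprn_gt0.
have -> : (1 - rho) * (2 / 3 * sg * p ^+ 3) = ((1 - rho) * (2 / 3 * sg ^+ 3 * p ^+ 3)) * (sg ^+ 2)^-1.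
  by field; rewrite gt_eqF.
apply: ler_wpM2r; first by rewrite invr_ge0 ltW.
have E : (2 * sg * p) ^+ 3 = 8 * (sg ^+ 3 * p ^+ 3) by ring.
rewrite E in h3.
have : 0 < sg ^+ 3 * p ^+ 3 by rewrite mulr_gt0 // exprn_gt0.
have -> : (1 - rho) * (2 / 3 * sg ^+ 3 * p ^+ 3) = (1 - rho) * 2 / 3 * (sg ^+ 3 * p ^+ 3) by ring.
nra.
Qed.

Lemma k1A eps K sg sm p : 0 < eps < 1 -> 0 < K -> 0 < sg <= sm ->
  p = eps / (1 + K + sm) ->
  - p * eps + 2^-1 * K * p ^+ 2 + 3^-1 * sg * p ^+ 3 <= - (eps ^+ 2 / (2 * (1 + K + sm))).
Proof.
move=> /andP[e0 e1] K0 /andP[s0 ssm] hp.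
have Z0 : 0 < 1 + K + sm by lra.
have pZ : p * (1 + K + sm) = eps by rewrite hp divfK ?gt_eqF.
have p0 : 0 < p by rewrite hp divr_gt0.
have p1 : p < 1.
  by rewrite hp ltr_pdivrMr // mul1r; lra.
have -> : - (eps ^+ 2 / (2 * (1 + K + sm))) = - (p * eps / 2).
  by rewrite -pZ; field; rewrite gt_eqF.
have : 2^-1 * K * p + 3^-1 * sg * p ^+ 2 <= eps / 2.
  rewrite -pZ.
  have : sg * p <= sm by nra.
  have -> : 3^-1 * sg * p ^+ 2 = 3^-1 * (sg * p) * p by ring.
  nra.
move=> h.
have h' := ler_wpM2l (ltW p0) h.
have E : p * (2^-1 * K * p + 3^-1 * sg * p ^+ 2) = 2^-1 * K * p ^+ 2 + 3^-1 * sg * p ^+ 3 by ring.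
rewrite E in h'.
lra.
Qed.

Lemma k1A' eps K sg s p : 0 < K -> 0 < sg -> 0 < s -> s ^+ 2 + 2 * K * s = 4 * sg * eps ->
  p = s / (2 * sg) ->
  - p * eps + 2^-1 * K * p ^+ 2 + 3^-1 * sg * p ^+ 3 <= - (2 / 3 * sg * p ^+ 3) /\ s = 2 * sg * p.
Proof.
move=> K0 s0 sp hs hp.
have ps : s = 2 * sg * p by rewrite hp; field; rewrite gt_eqF.
split=> //.
have he : eps = K * p + sg * p ^+ 2.
  have nz : 4 * sg != 0 by rewrite mulf_neq0 // gt_eqF.
  apply: (mulfI nz); rewrite -hs ps; ring.
rewrite he.
have : 0 <= K * p ^+ 2 by rewrite mulr_ge0 ?sqr_ge0 // ltW.
have E : - p * (K * p + sg * p ^+ 2) = - (K * p ^+ 2) - sg * p ^+ 3 by ring.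
rewrite E.
lra.
Qed.
Implicit Types (u v w : 'rV[R]_d) (H : 'M[R]_d).

Lemma ipE u v : ip u v = \sum_i u 0 i * v 0 i.
Proof. by rewrite /ip !mxE; apply: eq_bigr => i _; rewrite mxE. Qed.

Lemma ipC u v : ip u v = ip v u.
Proof. by rewrite !ipE; apply: eq_bigr => i _; rewrite mulrC. Qed.

Lemma ipZl a u v : ip (a *: u) v = a * ip u v.
Proof. by rewrite !ipE mulr_sumr; apply: eq_bigr => i _; rewrite mxE mulrA. Qed.

Lemma ipZr a u v : ip u (a *: v) = a * ip u v.
Proof. by rewrite ipC ipZl ipC. Qed.

Lemma ipBl u w v : ip (u - w) v = ip u v - ip w v.
Proof. by rewrite !ipE -sumrB; apply: eq_bigr => i _; rewrite !mxE mulrBl. Qed.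

Lemma ipBr u w v : ip v (u - w) = ip v u - ip v w.
Proof. by rewrite ipC ipBl !(ipC v). Qed.

Lemma ipNl u v : ip (- u) v = - ip u v.
Proof. by rewrite -scaleN1r ipZl mulN1r. Qed.

Lemma ip_ge0 u : 0 <= ip u u.
Proof. by rewrite ipE; apply: sumr_ge0 => i _; rewrite -expr2 sqr_ge0. Qed.

Lemma enorm_ge0 u : 0 <= enorm u.
Proof. exact: sqrtr_ge0. Qed.

Lemma enorm_sq u : enorm u ^+ 2 = ip u u.
Proof. exact: sqr_sqrtr (ip_ge0 u). Qed.

Lemma enormZ a u : enorm (a *: u) = `|a| * enorm u.
Proof.
rewrite /enorm ipZl ipZr mulrA -expr2 sqrtrM ?sqr_ge0 //.
by rewrite sqrtr_sqr.
Qed.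

Lemma enormN u : enorm (- u) = enorm u.
Proof. by rewrite -scaleN1r enormZ normrN normr1 mul1r. Qed.

Lemma appZ H a u : app H (a *: u) = a *: app H u.
Proof. by rewrite /app scalemxAl. Qed.

Lemma appB H1 H2 u : app (H1 - H2) u = app H1 u - app H2 u.
Proof. by rewrite /app mulmxBr. Qed.

Lemma cs_lite (w e : 'rV[R]_d) (delta : R) : 0 < delta -> enorm w <= delta * enorm e ->
  `| ip w e | <= delta * enorm e ^+ 2.
Proof.
move=> dp hw.
have key : forall l, 2 * l * ip w e <= ip w w + l ^+ 2 * ip e e.
  move=> l; have := ip_ge0 (w - l *: e).
  rewrite !ipBl !ipBr !ipZl !ipZr (ipC e w).
  lra.
have hww : ip w w <= delta ^+ 2 * enorm e ^+ 2.
  rewrite -enorm_sq; have := enorm_ge0 w; nra.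
have k1 := key delta; have k2 := key (- delta).
rewrite !enorm_sq in hww; rewrite enorm_sq.
rewrite sqrrN in k2.
have : delta * `|ip w e| <= delta * (delta * ip e e).
  case: (lerP 0 (ip w e)) => h.
  - rewrite ger0_norm //. nra.
  - rewrite ltr0_norm //; nra.
by rewrite ler_pM2l.
Qed.

Lemma coord_le1 (e : 'rV[R]_d) (i : 'I_d) : enorm e <= 1 -> `|e 0 i| <= 1.
Proof.
move=> he.
have h1 : e 0 i ^+ 2 <= ip e e.
  rewrite ipE (bigD1 i) //= -expr2 lerDl.
  by apply: sumr_ge0 => j _; rewrite -expr2 sqr_ge0.
have h2 : ip e e <= 1.
  rewrite -enorm_sq; have := enorm_ge0 e; nra.
have h3 : `|e 0 i| ^+ 2 <= 1 by rewrite real_normK ?num_real //; lra.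
have := normr_ge0 (e 0 i); nra.
Qed.

Lemma ip_app_bound H (e : 'rV[R]_d) : enorm e <= 1 ->
  ip e (app H e) <= \sum_i \sum_j `|H j i|.
Proof.
move=> he.
apply: (le_trans (ler_norm _)).
rewrite ipE; apply: (le_trans (ler_norm_sum _ _ _)).
apply: ler_sum => i _.
rewrite normrM /app mxE.
have hb := coord_le1 e i he.
rewrite -[X in _ <= X]mul1r; apply: ler_pM => //.
apply: (le_trans (ler_norm_sum _ _ _)).
apply: ler_sum => j _; rewrite normrM.
have := coord_le1 e j he; have := normr_ge0 (e 0 j); have := normr_ge0 (H j i); nra.
Qed.

Lemma ip_opnorm H u : 0 < enorm u -> ip (app H u) u <= opnorm H * enorm u ^+ 2.
Proof.
move=> tp; set t := enorm u.
set e := t^-1 *: u.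
have he : enorm e = 1.
  by rewrite /e enormZ ger0_norm ?invr_ge0 ?(ltW tp) // mulVf // gt_eqF.
have h : ip e (app H e) <= opnorm H.
  rewrite /opnorm; apply: ub_le_sup.
    exists (\sum_i \sum_j `|H j i|) => y [e' he' <-].
    exact: ip_app_bound.
  by exists e => //=; rewrite he.
move: h; rewrite /e appZ ipZl ipZr ipC => h.
have t2 : 0 < t ^+ 2 by rewrite exprn_gt0.
have : t^-1 * (t^-1 * ip (app H u) u) * t ^+ 2 <= opnorm H * t ^+ 2.
  by rewrite ler_pM2r.
have E : t^-1 * (t^-1 * ip (app H u) u) * t ^+ 2 = ip (app H u) u.
  by field; rewrite gt_eqF.
by rewrite E.
Qed.

Lemma caseA (G : 'rV[R]_d) (H : 'M[R]_d) (sigma K eps p : R) :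
  opnorm H <= K -> 0 < eps -> eps < enorm G -> 0 < p -> 0 < sigma ->
  model G H sigma ((- (p / enorm G)) *: G) <=
    - p * eps + 2^-1 * K * p ^+ 2 + 3^-1 * sigma * p ^+ 3.
Proof.
move=> hK he hg hp hs.
set g := enorm G.
have gp : 0 < g by apply: lt_trans hg.
set a := p / g.
have ap : 0 < a by rewrite divr_gt0.
have hGG : ip G G = g ^+ 2 by rewrite enorm_sq.
have hH : ip (app H G) G <= K * g ^+ 2.
  apply: (le_trans (ip_opnorm H G gp)).
  by rewrite ler_pM2r ?exprn_gt0.
rewrite /model appZ ipZl ipZr ipZr enormZ normrN ger0_norm ?(ltW ap) // hGG.
have hag : a * g = p by rewrite /a divfK ?gt_eqF.
have e1 : - a * (g ^+ 2) = - p * g by rewrite -hag; ring.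
have e2 : (a * g) ^+ 3 = p ^+ 3 by rewrite hag.
rewrite -/g e1 -e2.
have h2 : - a * (- a * ip (app H G) G) <= K * p ^+ 2.
  have -> : - a * (- a * ip (app H G) G) = a ^+ 2 * ip (app H G) G by ring.
  have -> : K * p ^+ 2 = a ^+ 2 * (K * g ^+ 2) by rewrite -hag; ring.
  apply: ler_wpM2l => //; exact: sqr_ge0.
rewrite e2.

have : - p * g <= - p * eps by rewrite !mulNr lerN2 ler_pM2l // ltW.
nra.
Qed.

Lemma caseB (G u : 'rV[R]_d) (H : 'M[R]_d) (sigma h : R) :
  0 < h -> 0 < sigma -> 0 < enorm u ->
  ip u (app H u) <= - h * enorm u ^+ 2 -> ip G u <= 0 ->
  model G H sigma ((h / (sigma * enorm u)) *: u) <= - (h ^+ 3 / (6 * sigma ^+ 2)).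
Proof.
move=> hp sp wp hq hg.
set w := enorm u.
set a := h / (sigma * w).
have ap : 0 < a by rewrite /a divr_gt0 // mulr_gt0.
rewrite /model appZ ipZl ipZr ipZr enormZ ger0_norm ?(ltW ap) // (ipC (app H u)).
have e1 : a * w = h / sigma by rewrite /a; field; rewrite !gt_eqF.
have t1 : a * ip G u <= 0 by rewrite pmulr_rle0.
have t2 : a * (a * ip u (app H u)) <= - h * (a * w) ^+ 2.
  have -> : a * (a * ip u (app H u)) = a ^+ 2 * ip u (app H u) by ring.
  have -> : - h * (a * w) ^+ 2 = a ^+ 2 * (- h * w ^+ 2) by ring.
  apply: ler_wpM2l => //; exact: sqr_ge0.
rewrite e1 in t2.
have -> : 3^-1 * sigma * (a * w) ^+ 3 = h ^+ 3 / (3 * sigma ^+ 2).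
  by rewrite e1; field; rewrite gt_eqF.
have e3 : - h * (h / sigma) ^+ 2 = - (h ^+ 3 / sigma ^+ 2) by field; rewrite gt_eqF.
rewrite e3 in t2.
have -> : h ^+ 3 / (3 * sigma ^+ 2) = 3^-1 * (h ^+ 3 / sigma ^+ 2) by field; rewrite gt_eqF.
have -> : h ^+ 3 / (6 * sigma ^+ 2) = 6^-1 * (h ^+ 3 / sigma ^+ 2) by field; rewrite gt_eqF.
lra.
Qed.

Lemma sqrt_fact (K sg eps s : R) : 0 < K -> 0 < sg -> 0 < eps ->
  s = Num.sqrt (K ^+ 2 + 4 * sg * eps) - K -> 0 < s /\ s ^+ 2 + 2 * K * s = 4 * sg * eps.
Proof.
move=> K0 s0 e0 ->.
have X0 : 0 <= K ^+ 2 + 4 * sg * eps.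
  by apply: addr_ge0; [exact: sqr_ge0| rewrite !mulr_ge0 // ltW].
have r2 := sqr_sqrtr X0; have r0 := sqrtr_ge0 (K ^+ 2 + 4 * sg * eps).
set r := Num.sqrt _ in r2 r0 *.
have se : 0 < sg * eps by rewrite mulr_gt0.
split; first nra.
have -> : (r - K) ^+ 2 + 2 * K * (r - K) = r ^+ 2 - K ^+ 2 by ring.
by rewrite r2; ring.
Qed.

Variables (M : Type) (Rt : M -> 'rV[R]_d -> M).

Definition Dk (KH nu epsg epsH sm : R) :=
  Num.min (epsg ^+ 2 / (2 * (1 + KH + sm))) (nu ^+ 3 * epsH ^+ 3 / (6 * sm ^+ 2)).

Lemma step_lemma (f : M -> R) (rhoTH gamma nu epsg epsH LH KH deltaH : R)
  (x : nat -> M) (sigma : nat -> R) (H : nat -> 'M[R]_d) (eta : nat -> 'rV[R]_d) k :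
  0 < rhoTH < 1 -> 1 < gamma -> 0 < nu -> 0 < LH -> 0 < KH ->
  0 < epsg < 1 -> 0 < epsH -> 0 < deltaH ->
  0 < sigma k <= 2 * gamma * LH ->
  ~ stop_test epsg epsH (rgrad Rt f (x k)) (H k) ->
  step_ok Rt f rhoTH gamma nu epsg epsH LH KH deltaH x sigma H eta k ->
  0 < sigma k.+1 <= 2 * gamma * LH /\
  ((sigma k.+1 = sigma k / gamma /\
    rhoTH * Dk KH nu epsg epsH (2 * gamma * LH) <= f (x k) - f (x k.+1)) \/
   (x k.+1 = x k /\ sigma k.+1 = gamma * sigma k)).
Proof.
move=> /andP[r0 r1] g1 nu0 L0 K0 /andP[e0 e1] eH0 d0 /andP[s0 ssm] hstop.
rewrite /step_ok; cbv zeta.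
set G := rgrad Rt f (x k); set sg := sigma k; set Hk := H k; set e := eta k.
set Hf := rhess Rt f (x k); set sm := 2 * gamma * LH.
set m := model G Hk sg.
move: s0 ssm; rewrite -/sg -/sm => s0 ssm.
case=> _ [hsucc [hfail [hA1 [hA2 [hA3 [hC [hE hdel]]]]]]].
set D := Dk KH nu epsg epsH sm.
set Del := - m e.
have sm0 : 0 < sm by rewrite /sm !mulr_gt0 //; lra.
have [c1 [c10 [c1a [c1b hd1]]]] : exists c1, 0 < c1 /\ c1 <= 12^-1 /\ c1 <= (1 - rhoTH) / 6 /\
    deltaH <= c1 * (Num.sqrt (KH ^+ 2 + 4 * sg * epsg) - KH).
  exists (Num.min (12^-1) ((1 - rhoTH) / 6)).
  split; first by rewrite lt_min; apply/andP; split; lra.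
  split; first by rewrite ge_min lexx.
  split; first by rewrite ge_min lexx orbT.
  by move: hdel; rewrite le_min => /andP[].
have [c2 [c20 [c2a [c2b hd2]]]] : exists c2, 0 < c2 /\ c2 <= 6^-1 /\ c2 <= (1 - rhoTH) / 3 /\
    deltaH <= c2 * (nu * epsH).
  exists (Num.min (6^-1) ((1 - rhoTH) / 3)).
  split; first by rewrite lt_min; apply/andP; split; lra.
  split; first by rewrite ge_min lexx.
  split; first by rewrite ge_min lexx orbT.
  by move: hdel; rewrite le_min mulrA => /andP[].
have [K1 K2] : D <= Del /\ 8 / 3 * deltaH ^+ 3 / sg ^+ 2 <= (1 - rhoTH) * Del.
  have hG : ip G G = enorm G ^+ 2 by rewrite enorm_sq.
  case: (lerP (enorm G) epsg) => hg.
  -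
    have hl : lambda_min Hk < - epsH.
      rewrite ltNge; apply/negP => hl; apply: hstop; split => //.
    have l0 : lambda_min Hk < 0 by lra.
    have [u [aE [hu1 [hu2 [hu3 [haE [hmin hle]]]]]]] := hE l0.
    set w := enorm u in hu1 hu2.
    have w0 : 0 < w.
      rewrite lt_neqAle enorm_ge0 andbT; apply/eqP => hw.
      by move: hu2; rewrite -hw expr0n /= mulr0 ltxx.
    set h := nu * epsH.
    have h0 : 0 < h by rewrite mulr_gt0.
    have hq : ip u (app Hk u) <= - h * w ^+ 2.
      apply: (le_trans hu1).
      have w2 : 0 < w ^+ 2 by rewrite exprn_gt0.
      rewrite /h; nra.
    have hB : m ((h / (sg * w)) *: u) <= - (h ^+ 3 / (6 * sg ^+ 2)).
      exact: caseB.
    have hm := hmin (h / (sg * w)) (ltW (divr_gt0 h0 (mulr_gt0 s0 w0))).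
    have hDel : h ^+ 3 / (6 * sg ^+ 2) <= Del by rewrite /Del; lra.
    split.
      apply: le_trans hDel.
      rewrite /D /Dk ge_min; apply/orP; right.
      have -> : nu ^+ 3 * epsH ^+ 3 = h ^+ 3 by rewrite /h exprMn.
      apply: div_anti.
        by rewrite mulr_gt0 // exprn_gt0.
      rewrite ler_pM2l // -subr_ge0.
      have -> : sm ^+ 2 - sg ^+ 2 = (sm - sg) * (sm + sg) by ring.
      apply: mulr_ge0; lra.
      by apply: exprn_ge0; exact: ltW.
    apply: (le_trans (k2B _ _ _ _ _ d0 h0 s0 _ c20 c2a c2b hd2)); first by apply/andP.
    by rewrite ler_pM2l ?subr_gt0.
  -
    set s := Num.sqrt (KH ^+ 2 + 4 * sg * epsg) - KH in hd1.
    have [sp shs] := sqrt_fact _ _ _ _ K0 s0 e0 (erefl s).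
    set p1 := s / (2 * sg).
    have [hb1 hs1] := k1A' _ _ _ _ _ K0 s0 sp shs (erefl p1).
    have p10 : 0 < p1 by rewrite divr_gt0 // mulr_gt0.
    have [aC [aC0 [hmin hle]]] := hC.
    have hA1' : m (- ((p1 / enorm G) *: G)) <= - p1 * epsg + 2^-1 * KH * p1 ^+ 2 + 3^-1 * sg * p1 ^+ 3.
      by rewrite -scaleNr; apply: caseA.
    have hm1 := hmin (p1 / enorm G) (ltW (divr_gt0 p10 (lt_trans e0 hg))).
    set sm' := sm.
    set p2 := epsg / (1 + KH + sm).
    have p20 : 0 < p2 by rewrite divr_gt0 //; lra.
    have hb2 := k1A epsg KH sg sm p2 (introT andP (conj e0 e1)) K0 (introT andP (conj s0 ssm)) (erefl p2).
    have hA2' : m (- ((p2 / enorm G) *: G)) <= - p2 * epsg + 2^-1 * KH * p2 ^+ 2 + 3^-1 * sg * p2 ^+ 3.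
      by rewrite -scaleNr; apply: caseA.
    have hm2 := hmin (p2 / enorm G) (ltW (divr_gt0 p20 (lt_trans e0 hg))).
    split.
      apply: (@le_trans _ _ (epsg ^+ 2 / (2 * (1 + KH + sm)))).
        by rewrite /D /Dk ge_min lexx.
      rewrite /Del; lra.
    rewrite hs1 in hd1.
    apply: (le_trans (k2A _ _ _ _ _ d0 p10 s0 _ c10 c1a c1b hd1)); first by apply/andP.
    rewrite ler_pM2l ?subr_gt0 // /Del; lra.
have D0 : 0 < D.
  rewrite /D /Dk lt_min; apply/andP; split.
    apply: divr_gt0; first exact: exprn_gt0.
    apply: mulr_gt0; lra.
  apply: divr_gt0; first by apply: mulr_gt0; exact: exprn_gt0.
  apply: mulr_gt0; [lra | exact: exprn_gt0].
have Del0 : 0 < Del by apply: lt_le_trans K1.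
set t := enorm e.
have t0 : 0 <= t := enorm_ge0 e.
have hsuc : 2 * LH <= sg -> rhoTH <= (f (x k) - f (Rt (x k) e)) / Del.
  move=> hs; rewrite ler_pdivlMr //.
  have hE' := cs_lite _ _ _ d0 hA3.
  rewrite appB ipBl in hE'.
  rewrite ler_norml in hE'; case/andP: hE' => hE1 hE2.
  rewrite ler_norml in hA1; case/andP: hA1 => hA1a hA1b.
  have hp := poly_ineq _ _ _ s0 t0 d0.
  have t3 : 0 <= t ^+ 3 by apply: exprn_ge0.
  have hLt : LH * t ^+ 3 <= sg / 2 * t ^+ 3 by apply: ler_wpM2r => //; lra.
  move: K2 hE1 hE2 hA1a hA1b hp hLt; rewrite /Del /m /model -/t.
  move=> K2 hE1 hE2 hA1a hA1b hp hLt.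
  lra.
case: (lerP rhoTH ((f (x k) - f (Rt (x k) e)) / Del)) => hr.
- have [hx hs'] := hsucc hr.
  have g0 : 0 < gamma by lra.
  split.
    rewrite hs'; apply/andP; split; first by rewrite divr_gt0.
    apply: (le_trans _ ssm); rewrite ler_pdivrMr //; nra.
  left; split => //.
  rewrite hx.
  move: hr; rewrite ler_pdivlMr // => hr.
  apply: le_trans hr; rewrite ler_pM2l //.
- have [hx hs'] := hfail hr.
  have sglt : sg < 2 * LH.
    rewrite ltNge; apply/negP => hs.
    by have := hsuc hs; rewrite leNgt hr.
  have g0 : 0 < gamma by lra.
  split.
    rewrite hs'; apply/andP; split; first by rewrite mulr_gt0.
    have hh : gamma * sg <= gamma * (2 * LH) by rewrite ler_pM2l //; exact: ltW.
    rewrite /sm; lra.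
  by right.
Qed.
End Main.

Lemma min_mul_ge (R : realType) (u v Mx c : R) : 0 < Mx -> c <= u * Mx -> c <= v * Mx ->
  c <= Num.min u v * Mx.
Proof. by move=> M0 hu hv; case: (leP u v). Qed.

Theorem corollary3p11 (R : realType) (d : nat) (M : Type)
  (Rt : M -> 'rV[R]_d -> M) (n : nat) (fi : 'I_n -> M -> R)
  (x0 : M) (sigma0 gamma rhoTH nu LH KH : R) :
  (0 < n)%N ->
  (forall y : M, Rt y 0 = y) ->
  (forall (i : 'I_n) (y : M), C2 (fi i \o Rt y)) ->
  0 < rhoTH < 1 -> 1 < gamma -> 0 < nu < 1 -> 0 < sigma0 ->
  0 < LH -> 0 < KH ->
  sigma0 <= 2 * gamma * LH ->
  (exists xs : M, forall y : M, favg fi xs <= favg fi y) ->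
  exists C : R, 0 < C /\
    forall (epsg epsH deltaH : R) (x : nat -> M) (sigma : nat -> R)
           (H : nat -> 'M[R]_d) (eta : nat -> 'rV[R]_d),
      0 < epsg < 1 -> 0 < epsH < 1 -> 0 < deltaH < 1 ->
      x 0%N = x0 -> sigma 0%N = sigma0 ->
      (forall k : nat,
         (forall j : nat, (j <= k)%N ->
            ~ stop_test epsg epsH (rgrad Rt (favg fi) (x j)) (H j)) ->
         step_ok Rt (favg fi) rhoTH gamma nu epsg epsH LH KH deltaH
                 x sigma H eta k) ->
      exists k : nat,
        k%:R <= C * Num.max (epsg ^- 2) (epsH ^- 3) /\
        stop_test epsg epsH (rgrad Rt (favg fi) (x k)) (H k).
Proof.
move=> n0 hR0 hC2 /andP[r0 r1] g1 /andP[nu0 nu1] s00 L0 K0 hs0 [xs hxs].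
set f := favg fi.
set sm := 2 * gamma * LH.
have sm0 : 0 < sm by rewrite /sm !mulr_gt0 //; lra.
set Z := 1 + KH + sm.
have Z0 : 0 < Z by rewrite /Z; lra.
set c := Num.min ((2 * Z)^-1) (nu ^+ 3 / (6 * sm ^+ 2)).
have c0 : 0 < c.
  rewrite /c lt_min; apply/andP; split.
    by rewrite invr_gt0; lra.
  apply: divr_gt0; first exact: exprn_gt0.
  apply: mulr_gt0; [lra | exact: exprn_gt0].
set F0 := f x0 - f xs.
have F00 : 0 <= F0 by rewrite /F0 subr_ge0; exact: hxs.
have lg0 : 0 < ln gamma := ln_gt0 g1.
set Lg := (ln sm - ln sigma0) / ln gamma.
have Lg0 : 0 <= Lg.
  apply: divr_ge0; last exact: ltW.
  by rewrite subr_ge0 ler_ln ?posrE.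
have Lge : Lg * ln gamma = ln sm - ln sigma0 by rewrite /Lg divfK ?gt_eqF.
set P := 2 * F0 / (rhoTH * c).
have P0 : 0 <= P by rewrite /P divr_ge0 ?mulr_ge0 // ltW ?mulr_gt0.
have Pe : P * (rhoTH * c) = 2 * F0 by rewrite /P divfK // gt_eqF // mulr_gt0.
exists (P + Lg + 1); split; first lra.
move=> epsg epsH deltaH x sigma H eta /andP[eg0 eg1] /andP[eH0 eH1] /andP[d0 d1] hx0 hsig0 hok.
set Mx := Num.max (epsg ^- 2) (epsH ^- 3).
have eg2 : 0 < epsg ^+ 2 by rewrite exprn_gt0.
have eH3 : 0 < epsH ^+ 3 by rewrite exprn_gt0.
have Mxg : epsg ^- 2 <= Mx by rewrite /Mx le_max lexx.
have MxH : epsH ^- 3 <= Mx by rewrite /Mx le_max lexx orbT.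
have Mx1 : 1 <= Mx.
  apply: le_trans Mxg; rewrite invf_ge1 //.
  have : epsg ^+ 2 <= epsg by rewrite expr2 ger_pMl //; exact: ltW.
  lra.
have Mx0 : 0 < Mx by lra.
set D := Dk R KH nu epsg epsH sm.
have DM : c <= D * Mx.
  apply: min_mul_ge => //.
  - apply: (@le_trans _ _ ((2 * Z)^-1)); first by rewrite /c ge_min lexx.
    have : epsg ^+ 2 * epsg ^- 2 <= epsg ^+ 2 * Mx by rewrite ler_pM2l.
    rewrite mulfV ?gt_eqF // => h.
    have -> : epsg ^+ 2 / (2 * (1 + KH + sm)) * Mx = (2 * Z)^-1 * (epsg ^+ 2 * Mx) by rewrite /Z; ring.
    rewrite -[X in X <= _]mulr1; apply: ler_wpM2l => //.
    by rewrite invr_ge0; lra.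
  - apply: (@le_trans _ _ (nu ^+ 3 / (6 * sm ^+ 2))); first by rewrite /c ge_min lexx orbT.
    have : epsH ^+ 3 * epsH ^- 3 <= epsH ^+ 3 * Mx by rewrite ler_pM2l.
    rewrite mulfV ?gt_eqF // => h.
    have -> : nu ^+ 3 * epsH ^+ 3 / (6 * sm ^+ 2) * Mx = nu ^+ 3 / (6 * sm ^+ 2) * (epsH ^+ 3 * Mx) by ring.
    rewrite -[X in X <= _]mulr1; apply: ler_wpM2l => //.
    apply: divr_ge0; first by apply: exprn_ge0; exact: ltW.
    by apply: mulr_ge0; [lra | exact: sqr_ge0].
have CM0 : 0 <= (P + Lg + 1) * Mx by apply: mulr_ge0; lra.
set N := Num.truncn ((P + Lg + 1) * Mx).
have /andP[hN1 hN2] := truncn_itv CM0.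
rewrite -/N in hN1 hN2.
case: (pselect (exists k, (k <= N)%N /\ stop_test epsg epsH (rgrad Rt f (x k)) (H k))).
  move=> [k [hk hst]]; exists k; split => //.
  by apply: le_trans hN1; rewrite ler_nat.
move=> hno; exfalso.
have hns : forall k, (k <= N)%N -> ~ stop_test epsg epsH (rgrad Rt f (x k)) (H k).
  by move=> k hk hst; apply: hno; exists k.
have D0 : 0 < D.
  rewrite /D /Dk lt_min; apply/andP; split.
    by apply: divr_gt0 => //; rewrite -/Z; lra.
  apply: divr_gt0; first by apply: mulr_gt0; exact: exprn_gt0.
  apply: mulr_gt0; [lra | exact: exprn_gt0].
have inv : forall k, (k <= N.+1)%N -> 0 < sigma k <= sm /\
   k%:R * (rhoTH * D / 2) * ln gamma <=
   (f x0 - f (x k)) * ln gamma + rhoTH * D / 2 * (ln (sigma k) - ln sigma0).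
  elim=> [|k IH] hk.
    rewrite hsig0 hx0; split; first by rewrite s00.
    by rewrite !subrr !mulr0 mul0r mul0r addr0.
  have hk' : (k <= N)%N by [].
  have [/andP[IHs1 IHs2] IHf] := IH (ltnW hk).
  have hst := @step_lemma R d M Rt f rhoTH gamma nu epsg epsH LH KH deltaH x sigma H eta k
     (introT andP (conj r0 r1)) g1 nu0 L0 K0 (introT andP (conj eg0 eg1)) eH0 d0
     (introT andP (conj IHs1 IHs2)) (hns k hk')
     (hok k (fun j hj => hns j (leq_trans hj hk'))).
  have [hs1 hcase] := hst.
  split => //.
  rewrite -natr1.
  have g0 : 0 < gamma by lra.
  case: hcase => [[hs hf] | [hx hs]].
  - rewrite hs lnM ?posrE ?invr_gt0 // lnV ?posrE //.
    have : rhoTH * D * ln gamma <= (f (x k) - f (x k.+1)) * ln gamma.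
      by apply: ler_wpM2r => //; exact: ltW.
    move: IHf; lra.
  - rewrite hs hx lnM ?posrE //.
    move: IHf; lra.
have [/andP[sN1 sN2] fN] := inv N.+1 (leqnn _).
have lnN : ln (sigma N.+1) <= ln sm by rewrite ler_ln ?posrE.
have fxs : f xs <= f (x N.+1) := hxs _.
set A := N.+1%:R : R.
have h0 : A * (rhoTH * D / 2) * ln gamma <= (F0 + rhoTH * D / 2 * Lg) * ln gamma.
  apply: (le_trans fN).
  have : 0 <= rhoTH * D / 2 by apply: divr_ge0 => //; apply: mulr_ge0; exact: ltW.
  move=> hpos.
  have hA := ler_wpM2l hpos (lerB lnN (lexx (ln sigma0))).
  have -> : (F0 + rhoTH * D / 2 * Lg) * ln gamma = F0 * ln gamma + rhoTH * D / 2 * (ln sm - ln sigma0).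
    by rewrite -Lge; ring.
  have : (f x0 - f (x N.+1)) * ln gamma <= F0 * ln gamma.
    by apply: ler_wpM2r; [exact: ltW | rewrite /F0; lra].
  lra.
rewrite ler_pM2r // in h0.
have h1 : A * (rhoTH * D) <= 2 * F0 + rhoTH * D * Lg by lra.
have h2 : (P + Lg + 1) * Mx < A by [].
have ALg : Lg < A.
  have : Lg <= Lg * Mx by rewrite -[X in X <= _]mulr1 ler_wpM2l.
  have : P * Mx >= 0 by apply: mulr_ge0; lra.
  have : Mx > 0 by [].
  move: h2; rewrite !mulrDl mul1r; lra.
have h3 : rhoTH * (D * Mx) * (A - Lg) <= 2 * F0 * Mx.
  have := ler_wpM2r (ltW Mx0) h1.
  have -> : (2 * F0 + rhoTH * D * Lg) * Mx = 2 * F0 * Mx + rhoTH * (D * Mx) * Lg by ring.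
  have -> : A * (rhoTH * D) * Mx = rhoTH * (D * Mx) * A by ring.
  move=> h; have -> : rhoTH * (D * Mx) * (A - Lg) = rhoTH * (D * Mx) * A - rhoTH * (D * Mx) * Lg by ring.
  lra.
have h4 : rhoTH * c * (A - Lg) <= rhoTH * (D * Mx) * (A - Lg).
  apply: ler_wpM2r; first lra.
  by apply: ler_wpM2l => //; exact: ltW.
have h5 : rhoTH * c * (A - Lg) <= rhoTH * c * (P * Mx).
  have -> : rhoTH * c * (P * Mx) = 2 * F0 * Mx by rewrite -Pe; ring.
  lra.
rewrite ler_pM2l ?mulr_gt0 // in h5.
have : Lg <= Lg * Mx by rewrite -[X in X <= _]mulr1 ler_wpM2l.
move: h2; rewrite !mulrDl mul1r; lra.
Qed.
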